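(* The filtration $F^\bullet(A/\!/E(1))_*$ is multiplicative: $F^i(A/\!/E(1))_*\cdot F^j(A/\!/E(1))_*\subseteq F^{i+j}(A/\!/E(1))_*$ for all $i,j$. Thus the associated graded $E^0(A/\!/E(1))_*=\bigoplus_jF^j/F^{j+1}$ is an $E(2)_*$-comodule algebra.
   Context: Let $p$ be an odd prime. In the mod $p$ dual Steenrod algebra let $\zeta_n,\overline{\tau}_n$ be the conjugates of Milnor's $\xi_n,\tau_n$. Let $(A/\!/E(1))_*=\mathbb{F}_p[\zeta_1,\zeta_2,\ldots]\otimes E(\overline{\tau}_2,\overline{\tau}_3,\ldots)$ and $(A/\!/E(2))_*=\mathbb{F}_p[\zeta_1,\ldots]\otimes E(\overline{\tau}_3,\ldots)$, comodule algebras over $E(2)_*=E(\overline{\tau}_0,\overline{\tau}_1,\overline{\tau}_2)$ via the coproduct of the dual Steenrod algebra. Weight: $\mathrm{wt}(\zeta_k)=\mathrm{wt}(\overline{\tau}_k)=p^k$, additive on products. Every monomial of $(A/\!/E(1))_*$ is uniquely $m\overline{\tau}_2^{\epsilon}$ with $m$ a monomial of $(A/\!/E(2))_*$ and $\epsilon\in\{0,1\}$. Let $F^j(A/\!/E(1))_*$ be the span of the monomials $m\overline{\tau}_2^\epsilon$ with $\mathrm{wt}(m)\geq pj$ (equivalently $F^j=\kappa^{-1}(\bigoplus_{k\ge j}M_2(k)\otimes E(\overline{\tau}_2))$ where $\kappa(m\overline{\tau}_2^\epsilon)=m\otimes\overline{\tau}_2^\epsilon$ and $M_2(k)$ is the span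 of monomials of $(A/\!/E(2))_*$ of weight $pk$); this is a decreasing filtration by $E(2)_*$-subcomodules. *)

(* Defs.v *)
From HB Require Import structures.
From mathcomp Require Import all_boot all_order all_algebra.
From mathcomp Require Import finmap.
Set Implicit Arguments. Unset Strict Implicit. Unset Printing Implicit Defensive.
Import GRing.Theory.
Local Open Scope fset_scope.

(* Concrete model of (A//E(1))_* = F_p[zeta_1,zeta_2,...] (x) E(taubar_2,taubar_3,...).
   A monomial is a pair (z, T):
   - z : finitely supported exponent map; z k is the exponent of zeta_{k+1};
   - T : finite set of indices; k \in T means taubar_{k+2} occurs
     (exterior generators, written in increasing order of index).
   So k = 0 in T is taubar_2; the monomial m taubar_2^eps of the paper has
   m = (z, T :\ 0) and eps = (0 \in T). *)
Definition Mon : Type := ({fsfun nat -> nat for fun => 0%N} * {fset nat})%type.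

Definition zmul (z1 z2 : {fsfun nat -> nat for fun => 0%N})
  : {fsfun nat -> nat for fun => 0%N} :=
  [fsfun k in (finsupp z1 `|` finsupp z2) => (z1 k + z2 k)%N].

(* weight of the (A//E(2))_*-part m of a monomial m taubar_2^eps:
   wt(zeta_k) = wt(taubar_k) = p^k, additive, taubar_2 excluded. *)
Definition wtE2 (p : nat) (m : Mon) : nat :=
  (\sum_(k <- finsupp m.1) m.1 k * p ^ k.+1
   + \sum_(k <- m.2 | k != 0%N) p ^ k.+2)%N.

(* number of transpositions needed to merge two increasing exterior words *)
Definition ninv (S T : {fset nat}) : nat :=
  (\sum_(s <- S) \sum_(t <- T) (t < s))%N.

(* Elements of the algebra: formal F_p-linear combinations of monomials,
   identified through their coefficient functions [coef]. *)
Definition Elt (p : nat) : Type := seq ('F_p * Mon).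

Definition coef (p : nat) (x : Elt p) (w : Mon) : 'F_p :=
  (\sum_(c <- x | c.2 == w) c.1)%R.

(* graded-commutative product: zeta's central (even degree), taubar's
   anticommute and square to zero (odd degree). *)
Definition Amul (p : nat) (x y : Elt p) : Elt p :=
  flatten [seq (if (a.2.2 `&` b.2.2 == fset0)
                then [:: (((-1) ^+ ninv a.2.2 b.2.2 * a.1 * b.1)%R,
                          (zmul a.2.1 b.2.1, a.2.2 `|` b.2.2))]
                else [::])
          | a <- x, b <- y].

(* F^j (A//E(1))_* : span of the monomials m taubar_2^eps with wt(m) >= p j,
   i.e. elements all of whose monomials with nonzero coefficient qualify. *)
Definition AinF (p j : nat) (x : Elt p) : Prop :=
  forall w : Mon, coef x w != 0%R -> (p * j <= wtE2 p w)%N.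
Arguments AinF : clear implicits.
Arguments Amul : clear implicits.

(* Main.v *)
Require Import Defs.
From mathcomp Require Import all_boot all_order all_algebra.
From mathcomp Require Import finmap zify.
Import GRing.Theory.
Local Open Scope fset_scope.

Lemma group_coef p (s : Elt p) (G : Mon -> 'F_p) :
  (\sum_(a <- s) G a.2 * a.1 = \sum_(u <- undup (map snd s)) G u * coef s u)%R.
Proof.
rewrite /coef.
under [RHS]eq_bigr => u _ do rewrite mulr_sumr big_mkcond /=.
rewrite exchange_big /=.
rewrite big_seq [RHS]big_seq; apply: eq_bigr => a ain.
rewrite (bigD1_seq a.2) ?undup_uniq ?mem_undup ?map_f ?mem_head //=.
- rewrite eqxx big1 ?addr0 // => u /negPf ua; by rewrite eq_sym ua.
Qed.

Definition Hc p (w u v : Mon) : 'F_p :=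
  if (u.2 `&` v.2 == fset0) && ((zmul u.1 v.1, u.2 `|` v.2) == w)
  then ((-1) ^+ ninv u.2 v.2)%R else 0%R.

Lemma coef_Amul p (x y : Elt p) w :
  coef (Amul p x y) w =
  (\sum_(a <- x) \sum_(b <- y) Hc p w a.2 b.2 * a.1 * b.1)%R.
Proof.
rewrite /coef /Amul big_flatten /= big_allpairs_dep /=.
apply: eq_bigr => a _; apply: eq_bigr => b _.
rewrite /Hc; case: ifP => [dis|ndis].
  rewrite big_cons big_nil /= addr0.
  by case: eqP => _ //=; rewrite !mul0r.
by rewrite big_nil /= !mul0r.
Qed.

Lemma sum_supp (z : {fsfun nat -> nat for fun => 0%N}) (B : {fset nat}) (c : nat -> nat) :
  finsupp z `<=` B ->
  (\sum_(k <- finsupp z) z k * c k = \sum_(k <- B) z k * c k)%N.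
Proof.
move=> sub; apply: big_fset_incl => // k _ kn.
by rewrite fsfun_dflt.
Qed.

Lemma wt_mul p (u v : Mon) : u.2 `&` v.2 == fset0 ->
  wtE2 p (zmul u.1 v.1, u.2 `|` v.2) = (wtE2 p u + wtE2 p v)%N.
Proof.
move=> dis; rewrite /wtE2 /=.
set B := finsupp u.1 `|` finsupp v.1.
have subz : finsupp (zmul u.1 v.1) `<=` B.
  apply/fsubsetP => k; rewrite mem_finsupp /zmul fsfunE.
  by case: ifP.
rewrite (@sum_supp _ _ _ subz) (@sum_supp u.1 B) ?fsubsetUl //.
rewrite (@sum_supp v.1 B) ?fsubsetUr //.
have -> : (\sum_(k <- B) zmul u.1 v.1 k * p ^ k.+1 =
   \sum_(k <- B) u.1 k * p ^ k.+1 + \sum_(k <- B) v.1 k * p ^ k.+1)%N.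
  rewrite -big_split big_seq [RHS]big_seq /=; apply: eq_bigr => k kB.
  by rewrite /zmul fsfunE kB mulnDl.
have pe : perm_eq (u.2 `|` v.2) (u.2 ++ v.2).
  apply: uniq_perm.
  - exact: fset_uniq.
  - rewrite cat_uniq !fset_uniq /= andbT; apply/hasPn => k kv.
    apply/negP => ku; move/eqP: dis => /fsetP /(_ k).
    by rewrite !inE ku kv.
  - by move=> k; rewrite mem_cat !inE.
rewrite (perm_big _ pe) big_cat /=.
lia.
Qed.

Theorem mainTheorem15 (p : nat) (p_prime : prime p) (p_odd : odd p)
  (i j : nat) (x y : Elt p) :
  AinF p i x -> AinF p j y -> AinF p (i + j) (Amul p x y).
Proof.
move=> Hx Hy w; apply: contraTT => hw.
rewrite coef_Amul.
under eq_bigr => a _.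
  rewrite (eq_bigr (fun b => Hc p w a.2 b.2 * b.1 * a.1)%R); last first.
    by move=> b _; rewrite mulrAC.
  rewrite -mulr_suml group_coef.
  over.
rewrite /= (@group_coef p x (fun u => \sum_(v <- undup [seq i.2 | i <- y]) Hc p w u v * coef y v))%R.
rewrite negbK; apply/eqP; apply: big1 => u _; rewrite mulr_suml; apply: big1 => v _.
have [cu|cu] := eqVneq (coef x u) 0%R; first by rewrite cu mulr0.
have [cv|cv] := eqVneq (coef y v) 0%R; first by rewrite cv mulr0 mul0r.
rewrite /Hc; case: ifP => [/andP[dis /eqP ew]|]; last by rewrite !mul0r.
exfalso; move: hw; rewrite -ew wt_mul // mulnDr.
have := Hx _ cu; have := Hy _ cv; lia.
Qed.
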